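(* Fix an integer $k \ge 2$, a graphlet $\mathsf{G} = (\mathsf{V},\mathsf{E})$ with $\mathsf{V} = \{u_1,\dots,u_k\}$, and a privacy budget $\epsilon > 0$. Let $\tilde{\mathsf{G}}(G)$ be the output of Algorithm 1 (described in the context) on an input graph $G$ with $n$ nodes. Then the expected $\ell_2$-error of $\tilde{\mathsf{G}}(G)$ as an estimator of $\mathsf{G}(G)$ is $O(n^{k-1})$; that is, there is a constant $C$ (depending only on $k$, $\mathsf{G}$ and $\epsilon$) such that for every $n$ and every simple undirected graph $G$ on $n$ nodes, $$\sqrt{\mathbb{E}\big[(\tilde{\mathsf{G}}(G) - \mathsf{G}(G))^2\big]} \le C\, n^{k-1}.$$
   Context: Let $G=(V,E)$ be a simple undirected graph with $V=\{v_1,\dots,v_n\}$; user $v_i$ holds its adjacency vector $a_i=(a_{i,1},\dots,a_{i,n})$ with $a_{i,j}=1$ iff $\{v_i,v_j\}\in E$. A graphlet is a simple graph $\mathsf{G}=(\mathsf{V},\mathsf{E})$ with $\mathsf{V}=\{u_1,\dots,u_k\}$; $\mathsf{G}(G)$ denotes the number of distinct subgraphs $(V',E')$ of $G$ (not necessarily induced) isomorphic to $\mathsf{G}$. $A(\mathsf{G})$ is the number of automorphisms of $\mathsf{G}$ (bijections $\pi:\mathsf{V}\to\mathsf{V}$ with $\{\pi(u_i),\pi(u_j)\}\in\mathsf{E}$ iff $\{u_i,u_j\}\in\mathsf{E}$). Algorithm 1: (1) Randomized response: every user $v_i$ reports, independently for each $j\ne i$ (and independently across users), a bit $\tilde a_{i,j}$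 with $\Pr[\tilde a_{i,j}=1]=e^{\epsilon}/(1+e^{\epsilon})$ if $a_{i,j}=1$ and $=1/(1+e^{\epsilon})$ if $a_{i,j}=0$. (2) The server computes $\hat a_{i,j} = \frac{e^{\epsilon}+1}{e^{\epsilon}-1}\tilde a_{i,j} - \frac{1}{e^{\epsilon}-1}$. (3) Let $\mathcal{D}$ be the set of tuples $\mathcal{W}=(v_{\ell_1},\dots,v_{\ell_k})\in V^k$ of pairwise distinct nodes; for each such tuple set $\tilde W(\mathcal{W},\mathsf{G}) = \prod_{\{u_i,u_j\}\in\mathsf{E},\, i<j} \hat a_{\ell_i,\ell_j}$. (4) Output $\tilde{\mathsf{G}}(G) = \big(\sum_{\mathcal{W}\in\mathcal{D}} \tilde W(\mathcal{W},\mathsf{G})\big)/A(\mathsf{G})$. *)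

(* Defs.v *)
From HB Require Import structures.
From mathcomp Require Import all_boot all_order all_algebra all_fingroup.
From mathcomp Require Import reals sequences.
Set Implicit Arguments. Unset Strict Implicit. Unset Printing Implicit Defensive.
Import Order.TTheory GRing.Theory Num.Theory.
Local Open Scope ring_scope.

Definition simple_graph (n : nat) (a : rel 'I_n) : Prop :=
  symmetric a /\ irreflexive a.

Definition is_subgraph (n : nat) (a : rel 'I_n)
    (p : {set 'I_n} * {set {set 'I_n}}) : bool :=
  [forall e in p.2, [exists x, exists y,
     [&& x != y, e == [set x; y], a x y, x \in p.1 & y \in p.1]]].

Definition iso_to_graphlet (k n : nat) (g : rel 'I_k)
    (p : {set 'I_n} * {set {set 'I_n}}) : bool :=
  [exists f : {ffun 'I_k -> 'I_n},
     [&& injectiveb f, f @: setT == p.1 &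
         [forall i, forall j, ([set f i; f j] \in p.2) == g i j]]].

Definition graphlet_count (k n : nat) (g : rel 'I_k) (a : rel 'I_n) : nat :=
  #|[set p : {set 'I_n} * {set {set 'I_n}} |
      is_subgraph a p && iso_to_graphlet g p]|.

Definition num_aut (k : nat) (g : rel 'I_k) : nat :=
  #|[set s : {perm 'I_k} | [forall i, forall j, g (s i) (s j) == g i j]]|.

Section Alg.
Variable R : realType.

Definition rr_prob (eps : R) (x b : bool) : R :=
  let p1 := if x then expR eps / (1 + expR eps) else 1 / (1 + expR eps) in
  if b then p1 else 1 - p1.

(* An outcome of step (1): the reported bits w (i,j) = tilde a_{i,j};
   diagonal bits are not reported and are fixed to false. Its probability
   (independent bits over all ordered pairs i <> j). *)
Definition outcome_prob (eps : R) (n : nat) (a : rel 'I_n)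
    (w : {ffun 'I_n * 'I_n -> bool}) : R :=
  (\prod_(ij : 'I_n * 'I_n | ij.1 != ij.2) rr_prob eps (a ij.1 ij.2) (w ij)) *
  \prod_(i : 'I_n) (~~ w (i, i))%:R.

Definition hat_a (eps : R) (n : nat) (w : {ffun 'I_n * 'I_n -> bool})
    (i j : 'I_n) : R :=
  (expR eps + 1) / (expR eps - 1) * (w (i, j))%:R - 1 / (expR eps - 1).

Definition estimator (eps : R) (k n : nat) (g : rel 'I_k)
    (w : {ffun 'I_n * 'I_n -> bool}) : R :=
  (\sum_(W : {ffun 'I_k -> 'I_n} | injectiveb W)
     \prod_(ij : 'I_k * 'I_k | (ij.1 < ij.2)%N && g ij.1 ij.2)
        hat_a eps w (W ij.1) (W ij.2)) / (num_aut g)%:R.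

Definition mse (eps : R) (k n : nat) (g : rel 'I_k) (a : rel 'I_n) : R :=
  \sum_(w : {ffun 'I_n * 'I_n -> bool})
     outcome_prob eps a w * (estimator eps g w - (graphlet_count g a)%:R) ^+ 2.

End Alg.

(* Main.v *)
Require Import Defs.
From HB Require Import structures.
From mathcomp Require Import all_boot all_order all_algebra all_fingroup.
From mathcomp Require Import reals sequences exp.
From mathcomp Require Import ring lra zify.
Import Order.TTheory GRing.Theory Num.Theory.

Lemma set2_eq (T : finType) (u v x y : T) :
  [set u; v] = [set x; y] -> (u = x /\ v = y) \/ (u = y /\ v = x).
Proof.
move=> /setP E.
have hu := E u; have hv := E v; have hx := E x; have hy := E y.
rewrite !inE !eqxx /= ?orbT in hu hv hx hy.
case/orP: (esym hu) => /eqP ?; case/orP: (esym hv) => /eqP ?;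
case/orP: hx => /eqP ?; case/orP: hy => /eqP ?; subst;
first [by left | by right].
Qed.
Arguments set2_eq {T u v x y}.

Section Comb.
Variables (k n : nat) (g : rel 'I_k) (a : rel 'I_n).
Hypothesis hg : simple_graph g.
Hypothesis ha : simple_graph a.

Definition homb (f : {ffun 'I_k -> 'I_n}) :=
  injectiveb f && [forall i, forall j, g i j ==> a (f i) (f j)].

Definition edges_of (f : {ffun 'I_k -> 'I_n}) : {set {set 'I_n}} :=
  [set [set f x.1; f x.2] | x in [set x : 'I_k * 'I_k | g x.1 x.2]].

Definition phi (f : {ffun 'I_k -> 'I_n}) := (f @: setT, edges_of f).

Definition Cset := [set p : {set 'I_n} * {set {set 'I_n}} |
      is_subgraph a p && iso_to_graphlet g p].

Lemma set2_g (f : 'I_k -> 'I_n) i j x y : injective f ->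
  [set f i; f j] = [set f x; f y] -> g i j = g x y.
Proof.
move=> injf /set2_eq [[/injf -> /injf ->]|[/injf -> /injf ->]] //.
by rewrite (proj1 hg).
Qed.

Lemma hom_phi_in f : homb f -> phi f \in Cset.
Proof.
case/andP => /injectiveP injf /forallP hom.
rewrite inE; apply/andP; split.
  apply/forallP => e; apply/implyP => /imsetP [x hx ->].
  rewrite inE in hx.
  apply/existsP; exists (f x.1); apply/existsP; exists (f x.2).
  rewrite (inj_eq injf) eqxx /= !imset_f ?inE // andbT.
  have -> : x.1 != x.2 by apply/eqP => E; move: hx; rewrite E (proj2 hg).
  have /forallP h1 := hom x.1; by rewrite /= (implyP (h1 x.2) hx).
apply/existsP; exists f; rewrite /= eqxx /=.
apply/andP; split; first by apply/injectiveP.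
apply/forallP => i; apply/forallP => j; apply/eqP; apply/idP/idP.
  by case/imsetP => x; rewrite inE => hx /(set2_g _ _ _ _ _ injf) ->.
by move=> hij; apply/imsetP; exists (i, j); rewrite ?inE.
Qed.

Lemma C_phi p : p \in Cset -> exists2 f, homb f & phi f = p.
Proof.
case: p => V E; rewrite inE => /andP [/forallP sub /existsP [f /and3P [/injectiveP injf /eqP hV /forallP hE]]].
have hE' i j : ([set f i; f j] \in E) = g i j.
  by have /forallP h1 := hE i; apply/eqP; apply: h1.
exists f.
  apply/andP; split; first by apply/injectiveP.
  apply/forallP => i; apply/forallP => j; apply/implyP => hij.
  rewrite -hE' in hij.
  have := implyP (sub _) hij => /existsP [x /existsP [y /and5P [_ /eqP e2 axy _ _]]].
  case: (set2_eq e2) => [[-> ->]|[-> ->]] //.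
  by rewrite (proj1 ha).
move: hV => /= hV; rewrite /phi hV; congr pair; apply/setP => e; apply/idP/idP.
  by case/imsetP => x; rewrite inE => hx ->; rewrite hE'.
move=> he.
have := implyP (sub _) he => /existsP [x /existsP [y /and5P [_ /eqP e2 _ hx hy]]].
rewrite /= -hV in hx hy.
case/imsetP: hx => i _ ?; case/imsetP: hy => j _ ?; subst.
apply/imsetP; exists (i, j) => //.
by rewrite inE /= -hE'.
Qed.

Definition AutG := [set s : {perm 'I_k} | [forall i, forall j, g (s i) (s j) == g i j]].

Lemma fiber f0 : homb f0 ->
  #|[set f | homb f && (phi f == phi f0)]| = #|AutG|.
Proof.
case/andP => /injectiveP inj0 /forallP hom0.
pose comp (s : {perm 'I_k}) := [ffun i => f0 (s i)].
have injc : injective comp.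
  move=> s t /ffunP E; apply/permP => i.
  by have := E i; rewrite !ffunE => /inj0.
suff -> : [set f | homb f && (phi f == phi f0)] = comp @: AutG.
  by rewrite card_imset.
apply/setP => f; apply/idP/idP; last first.
  case/imsetP => s hs0 ->; move: hs0; rewrite /AutG inE => /forallP hs.
  have hs' i j : g (s i) (s j) = g i j by apply/eqP; have /forallP h1 := hs i; apply: h1.
  rewrite inE; apply/andP; split.
    apply/andP; split.
      by apply/injectiveP => i j; rewrite !ffunE => /inj0 /perm_inj.
    apply/forallP => i; apply/forallP => j; apply/implyP => hij.
    rewrite !ffunE; have /forallP h1 := hom0 (s i); apply: (implyP (h1 (s j))).
    by rewrite hs'.
  rewrite /phi; apply/eqP; congr pair.
    apply/setP => x; apply/imsetP/imsetP => [[i _ ->]|[i _ ->]].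
      by exists (s i); rewrite ?ffunE.
    by exists (s^-1 i)%g => //; rewrite ffunE permKV.
  apply/setP => e; apply/imsetP/imsetP => [[x hx ->]|[x hx ->]].
    exists (s x.1, s x.2); last by rewrite !ffunE.
    by rewrite inE /= hs'; rewrite inE in hx.
  exists ((s^-1 x.1)%g, (s^-1 x.2)%g); last by rewrite !ffunE !permKV.
  by rewrite inE /= -hs' !permKV; rewrite inE in hx.
rewrite inE => /andP [/andP [/injectiveP injf /forallP homf] /eqP [E1 E2]].
have ex i : exists j, f0 j == f i.
  have : f i \in f @: setT by apply: imset_f.
  by rewrite E1 => /imsetP [j _ ->]; exists j.
pose sf i := odflt i [pick j | f0 j == f i].
have sfE i : f0 (sf i) = f i.
  rewrite /sf; case: pickP => [j /eqP //|none].
  by have [j] := ex i; rewrite none.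
have injs : injective sf by move=> i j h; apply: injf; rewrite -!sfE h.
apply/imsetP; exists (perm injs); last first.
  by apply/ffunP => i; rewrite ffunE permE sfE.
rewrite /AutG inE; apply/forallP => i; apply/forallP => j; rewrite !permE.
apply/eqP; apply/idP/idP => h.
  have : [set f0 (sf i); f0 (sf j)] \in edges_of f0.
    by apply/imsetP; exists (sf i, sf j); rewrite ?inE.
  rewrite -E2 !sfE => /imsetP [x hx /(set2_g _ _ _ _ _ injf) ->].
  by rewrite inE in hx.
have : [set f i; f j] \in edges_of f.
  by apply/imsetP; exists (i, j); rewrite ?inE.
rewrite E2 -!sfE => /imsetP [x hx /(set2_g _ _ _ _ _ inj0) ->].
by rewrite inE in hx.
Qed.

Lemma card_hom : #|[set f | homb f]| = #|AutG| * #|Cset|.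
Proof.
rewrite -sum1_card (partition_big_imset phi) /=.
have -> : phi @: [set f | homb f] = Cset.
  apply/setP => p; apply/imsetP/idP => [[f hf ->]|hp].
    by apply: hom_phi_in; rewrite inE in hf.
  by have [f hf <-] := C_phi _ hp; exists f; rewrite ?inE.
rewrite mulnC -sum_nat_const; apply: eq_bigr => p hp.
have [f0 hf0 <-] := C_phi _ hp.
rewrite -(fiber _ hf0) -sum1_card; apply: eq_bigl => f.
by rewrite !inE.
Qed.

End Comb.

Local Open Scope ring_scope.

Section Prob.
Variable R : realType.
Variable eps : R.
Hypothesis heps : 0 < eps.

Lemma e_gt1 : 1 < expR eps. Proof. by rewrite expR_gt1. Qed.

Definition hatb (b : bool) : R :=
  (expR eps + 1) / (expR eps - 1) * b%:R - 1 / (expR eps - 1).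

Lemma hat_aE n (w : {ffun 'I_n * 'I_n -> bool}) i j :
  hat_a eps w i j = hatb (w (i, j)).
Proof. by []. Qed.

Lemma rr_sum1 x : rr_prob eps x true + rr_prob eps x false = 1.
Proof. by rewrite /rr_prob /=; ring. Qed.

Lemma rr_mean x :
  rr_prob eps x true * hatb true + rr_prob eps x false * hatb false = x%:R.
Proof.
have he := e_gt1.
have h1 : expR eps - 1 != 0 by rewrite subr_eq0 gt_eqF.
have h2 : 1 + expR eps != 0 by rewrite gt_eqF // ltr_wpDr // ltW // (lt_trans ltr01).
rewrite /rr_prob /hatb; case: x => /=; field => //; rewrite h1 h2 //.
Qed.

Lemma rr_ge0 x b : 0 <= rr_prob eps x b.
Proof.
have he := e_gt1.
have h0 : 0 < expR eps by apply: lt_trans he.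
have h2 : 0 < 1 + expR eps by lra.
rewrite /rr_prob; case: x; case: b => /=.
- by rewrite divr_ge0 // ltW.
- rewrite subr_ge0 ler_pdivrMr //; lra.
- by rewrite divr_ge0 // ltW.
- rewrite subr_ge0 ler_pdivrMr //; lra.
Qed.

Variable n : nat.
Variable a : rel 'I_n.

Definition rho (ij : 'I_n * 'I_n) (b : bool) : R :=
  if ij.1 != ij.2 then rr_prob eps (a ij.1 ij.2) b else (~~ b)%:R.

Lemma outcome_prodE w : outcome_prob eps a w = \prod_ij rho ij (w ij).
Proof.
rewrite /outcome_prob [RHS](bigID (fun ij : 'I_n * 'I_n => ij.1 != ij.2)) /=.
congr (_ * _).
  by apply: eq_bigr => ij h; rewrite /rho h.
rewrite (eq_bigr (fun i => \prod_(j | i == j) (~~ w (i, j))%:R)); last first.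
  by move=> i _; rewrite (big_pred1 i) // => j; rewrite /= eq_sym.
rewrite pair_big_dep /=.
apply: eq_big => [ij|[i j] /=]; first by rewrite negbK.
by move=> h; rewrite /rho /= h.
Qed.

Lemma rho_ge0 ij b : 0 <= rho ij b.
Proof. by rewrite /rho; case: ifP => _; [apply: rr_ge0 | rewrite ler0n]. Qed.

Lemma outcome_ge0 w : 0 <= outcome_prob eps a w.
Proof. by rewrite outcome_prodE; apply: prodr_ge0 => ij _; apply: rho_ge0. Qed.

Lemma rho_sum1 ij : rho ij true + rho ij false = 1.
Proof. by rewrite /rho; case: ifP => _; [apply: rr_sum1 | rewrite /= add0r]. Qed.

Lemma expect_prod (S : {set 'I_n * 'I_n}) :
  (forall ij, ij \in S -> ij.1 != ij.2) ->
  \sum_w outcome_prob eps a w * \prod_(ij in S) hatb (w ij) =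
  \prod_(ij in S) (a ij.1 ij.2)%:R.
Proof.
move=> hS.
have E w : outcome_prob eps a w * \prod_(ij in S) hatb (w ij) =
    \prod_ij (rho ij (w ij) * (if ij \in S then hatb (w ij) else 1)).
  by rewrite outcome_prodE [\prod_(ij in S) _]big_mkcond -big_split.
rewrite (eq_bigr _ (fun w _ => E w)).
rewrite -(bigA_distr_bigA (fun ij b => rho ij b * (if ij \in S then hatb b else 1))).
rewrite [RHS]big_mkcond; apply: eq_bigr => ij _; rewrite big_bool /=.
case: ifP => hin; last by rewrite !mulr1 rho_sum1.
by rewrite /rho (hS _ hin) rr_mean.
Qed.

End Prob.
Arguments hatb {R}.


Section Main.
Variable R : realType.

Lemma prod_bool_nat (T : finType) (Q : pred T) (b : T -> bool) :
  \prod_(i | Q i) ((b i)%:R : R) = ([forall i, Q i ==> b i])%:R.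
Proof.
case: (boolP [exists i, Q i && ~~ b i]) => [/existsP [i /andP [Qi nbi]] | /existsPn hn].
  rewrite (bigD1 i) //= (negbTE nbi) mul0r.
  case: forallP => // h; by move: (h i); rewrite Qi (negbTE nbi).
have h i : Q i -> b i by move=> Qi; move: (hn i); rewrite Qi /= negbK.
rewrite big1; last by move=> i /h ->.
by case: forallP => // hf; exfalso; apply: hf => i; apply/implyP; apply: h.
Qed.

Lemma prod_split (T : finType) (Q : pred T) (G : bool -> T -> R) :
  \prod_(j : bool * T | Q j.2) G j.1 j.2 =
  \prod_(e | Q e) G true e * \prod_(e | Q e) G false e.
Proof.
rewrite (eq_bigl (fun j : bool * T => xpredT j.1 && Q j.2)) //.
by rewrite -(pair_big_dep xpredT (fun _ e => Q e) G) big_bool.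
Qed.

Lemma count_ffun (k n : nat) (j1 j2 : 'I_k) (x y : 'I_n) : j1 != j2 ->
  \sum_(f : {ffun 'I_k -> 'I_n}) (((x == f j1) && (y == f j2))%:R : R) =
  n%:R ^+ (k - 2).
Proof.
move=> hj.
pose c i (v : 'I_n) : R :=
  if i == j1 then (x == v)%:R else if i == j2 then (y == v)%:R else 1.
have E (f : {ffun 'I_k -> 'I_n}) : (((x == f j1) && (y == f j2))%:R : R) = \prod_i c i (f i).
  rewrite (bigD1 j1) // (bigD1 j2) /=; last by rewrite eq_sym.
  rewrite big1; last by move=> i /andP [/negbTE h1 /negbTE h2]; rewrite /c h1 h2.
  rewrite /c eqxx (eq_sym j2 j1) (negbTE hj) eqxx mulr1.
  by case: (x == f j1); case: (y == f j2); rewrite /= ?mulr0 ?mulr1 ?mul0r.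
rewrite (eq_bigr _ (fun f _ => E f)).
rewrite -(bigA_distr_bigA c).
have S1 (z : 'I_n) : \sum_v ((z == v)%:R : R) = 1.
  rewrite (bigD1 z) //= eqxx big1 ?addr0 // => v hv.
  by rewrite eq_sym (negbTE hv).
rewrite (eq_bigr (fun i => if ~~ ((i == j1) || (i == j2)) then n%:R else 1)); last first.
  move=> i _; rewrite /c; case: (i == j1) => /=; first exact: S1.
  case: (i == j2); first exact: S1.
  by rewrite sumr_const card_ord.
rewrite -big_mkcond /= prodr_const.
congr (_ ^+ _).
have h := cardC (pred2 j1 j2); rewrite card2 hj card_ord in h.
transitivity #|[predC pred2 j1 j2]|; first by apply: eq_card => i; rewrite !inE.
have hk2 : (2 <= k)%N by rewrite -h leq_addr.
by apply/eqP; rewrite -(eqn_add2l 2) h subnKC.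
Qed.

Section Est.
Variables (eps : R) (k n : nat) (g : rel 'I_k) (a : rel 'I_n).
Hypothesis heps : 0 < eps.

Definition Pe : pred ('I_k * 'I_k) := fun e => ((e.1 < e.2)%N && g e.1 e.2).

Definition Xf (W : {ffun 'I_k -> 'I_n}) (w : {ffun 'I_n * 'I_n -> bool}) : R :=
  \prod_(e | Pe e) hatb eps (w (W e.1, W e.2)).

Definition mu (W : {ffun 'I_k -> 'I_n}) : R :=
  \prod_(e | Pe e) (a (W e.1) (W e.2))%:R.

Definition share (W W' : {ffun 'I_k -> 'I_n}) :=
  [exists e, exists e', [&& Pe e, Pe e', W e.1 == W' e'.1 & W e.2 == W' e'.2]].

Notation Pw w := (outcome_prob eps a w).

Lemma EXP (J : finType) (Q : pred J) (F : J -> 'I_n * 'I_n) :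
  {in Q &, injective F} -> (forall j, Q j -> (F j).1 != (F j).2) ->
  \sum_w Pw w * \prod_(j | Q j) hatb eps (w (F j)) =
  \prod_(j | Q j) (a (F j).1 (F j).2)%:R.
Proof.
move=> hinj hoff.
have hinj' : {in [set j | Q j] &, injective F} by move=> x y; rewrite !inE; apply: hinj.
have E1 (w : {ffun 'I_n * 'I_n -> bool}) : \prod_(j | Q j) hatb eps (w (F j)) =
    \prod_(ij in F @: [set j | Q j]) hatb eps (w ij).
  by rewrite big_imset //; apply: eq_bigl => j; rewrite inE.
have E2 : \prod_(j | Q j) ((a (F j).1 (F j).2)%:R : R) =
    \prod_(ij in F @: [set j | Q j]) (a ij.1 ij.2)%:R.
  by rewrite big_imset //; apply: eq_bigl => j; rewrite inE.
rewrite (eq_bigr (fun w => Pw w * \prod_(ij in F @: [set j | Q j]) hatb eps (w ij))); last by move=> w _; rewrite E1.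
rewrite E2; apply: (@expect_prod R eps heps n a).
by move=> ij /imsetP [j]; rewrite inE => Qj ->; apply: hoff.
Qed.

Lemma sumP1 : \sum_w Pw w = 1.
Proof.
have h0 : forall ij : 'I_n * 'I_n, ij \in set0 -> ij.1 != ij.2 by move=> ij; rewrite inE.
have := @expect_prod R eps heps n a set0 h0.
rewrite !big_set0 => <-; by apply: eq_bigr => w _; rewrite big_set0 mulr1.
Qed.

Lemma Pe_neq e : Pe e -> e.1 != e.2.
Proof. by case/andP => l _; apply/eqP => E; move: l; rewrite E ltnn. Qed.

Lemma Pe_inj (W : {ffun 'I_k -> 'I_n}) : injective W ->
  {in Pe &, injective (fun e => (W e.1, W e.2))}.
Proof.
move=> injW [x1 x2] [y1 y2] _ _ [/injW /= -> /injW /= ->] //.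
Qed.

Lemma EX (W : {ffun 'I_k -> 'I_n}) : injectiveb W -> \sum_w Pw w * Xf W w = mu W.
Proof.
move/injectiveP => injW.
apply: (@EXP _ Pe (fun e => (W e.1, W e.2))); first exact: Pe_inj.
by move=> e /Pe_neq /= h; rewrite (inj_eq injW).
Qed.

Lemma EXX (W W' : {ffun 'I_k -> 'I_n}) : injectiveb W -> injectiveb W' -> ~~ share W W' ->
  \sum_w Pw w * (Xf W w * Xf W' w) = mu W * mu W'.
Proof.
move=> /injectiveP injW /injectiveP injW' nsh.
pose F2 (j : bool * ('I_k * 'I_k)) :=
  if j.1 then (W j.2.1, W j.2.2) else (W' j.2.1, W' j.2.2).
have EX2 (w : {ffun 'I_n * 'I_n -> bool}) : Xf W w * Xf W' w =
    \prod_(j : bool * ('I_k * 'I_k) | Pe j.2) hatb eps (w (F2 j)).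
  exact: esym (prod_split _ Pe (fun b e => hatb eps (w (F2 (b, e))))).
have EM : mu W * mu W' =
    \prod_(j : bool * ('I_k * 'I_k) | Pe j.2) (a (F2 j).1 (F2 j).2)%:R.
  exact: esym (prod_split _ Pe (fun b e => (a (F2 (b, e)).1 (F2 (b, e)).2)%:R)).
under eq_bigr => w _ do rewrite EX2.
rewrite EM; apply: EXP.
  move=> [b1 e1] [b2 e2] h1 h2.
  have p1 : Pe e1 := h1; have p2 : Pe e2 := h2.
  case: b1 {h1}; case: b2 {h2}; rewrite /F2 /= => -[E1 E2].
  - by congr pair; apply: (Pe_inj _ injW e1 e2 p1 p2); rewrite /= E1 E2.
  - by move: nsh; rewrite /share negb_exists => /forallP /(_ e1); rewrite negb_exists => /forallP /(_ e2); rewrite p1 p2 E1 E2 !eqxx.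
  - by move: nsh; rewrite /share negb_exists => /forallP /(_ e2); rewrite negb_exists => /forallP /(_ e1); rewrite p1 p2 E1 E2 !eqxx.
  - by congr pair; apply: (Pe_inj _ injW' e1 e2 p1 p2); rewrite /= E1 E2.
move=> [[] e] /= /Pe_neq h; rewrite /F2 /=.
  by rewrite (inj_eq injW).
by rewrite (inj_eq injW').
Qed.

Definition Df (W : {ffun 'I_k -> 'I_n}) w := Xf W w - mu W.
Definition cov (W W' : {ffun 'I_k -> 'I_n}) := \sum_w Pw w * (Df W w * Df W' w).

Lemma cov0 (W W' : {ffun 'I_k -> 'I_n}) : injectiveb W -> injectiveb W' ->
  ~~ share W W' -> cov W W' = 0.
Proof.
move=> iW iW' nsh.
have E (w : {ffun 'I_n * 'I_n -> bool}) : Pw w * (Df W w * Df W' w) =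
  (Pw w * (Xf W w * Xf W' w) + mu W * mu W' * Pw w) -
  (mu W' * (Pw w * Xf W w) + mu W * (Pw w * Xf W' w)) by rewrite /Df; ring.
rewrite /cov (eq_bigr _ (fun w _ => E w)) sumrB !big_split /= -!mulr_sumr.
rewrite EXX // !EX // sumP1; ring.
Qed.

Definition Hc : R := (expR eps + 1) / (expR eps - 1).

Lemma Hc_ge1 : 1 <= Hc.
Proof.
have he := @e_gt1 R eps heps.
have h1 : 0 < expR eps - 1 by rewrite subr_gt0.
by rewrite /Hc ler_pdivlMr // mul1r; lra.
Qed.

Lemma hatb_le b : `|hatb eps b| <= Hc.
Proof.
have he := @e_gt1 R eps heps.
have h1 : 0 < expR eps - 1 by rewrite subr_gt0.
rewrite /hatb /Hc !mul1r; set q := (expR eps - 1)^-1.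
have hq : 0 < q by rewrite invr_gt0.
rewrite ler_norml; case: b => /=; rewrite ?mulr1 ?mulr0; apply/andP; split; nra.
Qed.

Lemma X_le W w : `|Xf W w| <= Hc ^+ #|Pe|.
Proof.
rewrite /Xf normr_prod -prodr_const.
apply: ler_prod => e _; by rewrite normr_ge0 hatb_le.
Qed.

Lemma mu_le W : `|mu W| <= Hc ^+ #|Pe|.
Proof.
rewrite /mu normr_prod -prodr_const.
apply: ler_prod => e _; rewrite normr_ge0 /=.
apply: le_trans Hc_ge1; by case: (a _ _); rewrite normr_nat ?ler01 ?lexx.
Qed.

Definition Bc : R := (2 * Hc ^+ #|Pe|) ^+ 2.

Lemma D_le W w : `|Df W w| <= 2 * Hc ^+ #|Pe|.
Proof.
apply: le_trans (ler_normB _ _) _; rewrite mulr2n mulrDl mul1r.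
by apply: lerD; [apply: X_le | apply: mu_le].
Qed.

Lemma cov_le W W' : `|cov W W'| <= Bc.
Proof.
rewrite /cov; apply: le_trans (ler_norm_sum _ _ _) _.
apply: (@le_trans _ _ (\sum_w Pw w * Bc)).
  apply: ler_sum => w _; rewrite normrM (ger0_norm (@outcome_ge0 R eps heps n a _)).
  apply: ler_wpM2l; first exact: outcome_ge0.
  rewrite normrM /Bc expr2; apply: ler_pM => //; exact: D_le.
by rewrite -mulr_suml sumP1 mul1r.
Qed.

Definition Sh (W W' : {ffun 'I_k -> 'I_n}) : R :=
  \sum_(e | Pe e) \sum_(e' | Pe e') ((W e.1 == W' e'.1) && (W e.2 == W' e'.2))%:R.

Lemma Sh_ge0 (W W' : {ffun 'I_k -> 'I_n}) : 0 <= Sh W W'.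
Proof. by apply: sumr_ge0 => e _; apply: sumr_ge0 => e' _; rewrite ler0n. Qed.

Lemma Sh_ge1 (W W' : {ffun 'I_k -> 'I_n}) : share W W' -> 1 <= Sh W W'.
Proof.
case/existsP => e /existsP [e' /and4P [p p' h1 h2]].
rewrite /Sh (bigD1 e) //= (bigD1 e') //= h1 h2 /= -addrA lerDl.
apply: addr_ge0; first by apply: sumr_ge0 => i _; rewrite ler0n.
by apply: sumr_ge0 => i _; apply: sumr_ge0 => j _; rewrite ler0n.
Qed.

Lemma Bc_ge0 : 0 <= Bc.
Proof. by rewrite /Bc sqr_ge0. Qed.

Lemma cov_Sh (W W' : {ffun 'I_k -> 'I_n}) : injectiveb W -> injectiveb W' -> cov W W' <= Bc * Sh W W'.
Proof.
move=> iW iW'; case: (boolP (share W W')) => h.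
  apply: le_trans (ler_norm _) _; apply: le_trans (cov_le W W') _.
  by apply: ler_peMr; [apply: Bc_ge0 | apply: Sh_ge1].
by rewrite cov0 // mulr_ge0 // ?Bc_ge0 ?Sh_ge0.
Qed.

Lemma sum_Sh (W : {ffun 'I_k -> 'I_n}) : \sum_(W' : {ffun 'I_k -> 'I_n}) Sh W W' =
  (#|Pe|%:R) ^+ 2 * n%:R ^+ (k - 2).
Proof.
rewrite /Sh exchange_big /=.
rewrite (eq_bigr (fun e => \sum_(e' | Pe e') n%:R ^+ (k - 2))); last first.
  move=> e pe; rewrite exchange_big /=; apply: eq_bigr => e' pe'.
  rewrite -(@count_ffun k n e'.1 e'.2 (W e.1) (W e.2) (Pe_neq _ pe')).
  by apply: eq_bigr => W' _; rewrite !(eq_sym (W _)).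
by rewrite !sumr_const expr2 -mulrA !mulr_natl.
Qed.

Section Final.
Hypothesis hg : simple_graph g.
Hypothesis ha : simple_graph a.
Hypothesis hk : (2 <= k)%N.

Lemma hom_equiv (W : {ffun 'I_k -> 'I_n}) : injectiveb W ->
  [forall e, Pe e ==> a (W e.1) (W e.2)] = homb k n g a W.
Proof.
move=> iW; rewrite /homb iW /=; apply/forallP/forallP => h.
  move=> i; apply/forallP => j; apply/implyP => gij.
  case: (ltngtP i j) => hij.
  - by apply: (implyP (h (i, j))); rewrite /Pe /= hij gij.
  - have : a (W j) (W i).
      by apply: (implyP (h (j, i))); rewrite /Pe /= hij (proj1 hg) gij.
    by rewrite (proj1 ha).
  - have eij : i = j by apply: val_inj.
    by move: gij; rewrite eij (proj2 hg).
move=> [i j]; apply/implyP => /andP [_ gij] /=.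
by have /forallP hi := h i; apply: (implyP (hi j)).
Qed.

Lemma sum_mu : \sum_(W : {ffun 'I_k -> 'I_n} | injectiveb W) mu W =
  #|[set f | homb k n g a f]|%:R.
Proof.
rewrite (eq_bigr (fun W => ((homb k n g a W)%:R : R))); last first.
  by move=> W iW; rewrite /mu prod_bool_nat hom_equiv.
rewrite -sum1dep_card natr_sum big_mkcond [RHS]big_mkcond.
apply: eq_bigr => W _; case: (boolP (injectiveb W)) => iW.
  by case: (homb k n g a W).
by rewrite /homb (negbTE iW).
Qed.

Lemma Aut_pos : (0 < #|AutG k g|)%N.
Proof.
apply/card_gt0P; exists 1%g; rewrite /AutG inE.
by apply/forallP => i; apply/forallP => j; rewrite !perm1.
Qed.

Lemma mse_bound : mse eps g a <=
  Bc * (#|Pe|%:R) ^+ 2 * (n%:R ^+ (k - 1)) ^+ 2.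
Proof.
set A : R := (num_aut g)%:R.
have hA0 : 0 < A by rewrite ltr0n; exact: Aut_pos.
have hA : A != 0 by rewrite gt_eqF.
have hcount : ((graphlet_count g a)%:R : R) =
    (\sum_(W : {ffun 'I_k -> 'I_n} | injectiveb W) mu W) / A.
  rewrite sum_mu (@card_hom k n g a hg ha) natrM mulrAC mulfV ?mul1r //.
have hdiff (w : {ffun 'I_n * 'I_n -> bool}) :
    estimator eps g w - (graphlet_count g a)%:R =
    (\sum_(W : {ffun 'I_k -> 'I_n} | injectiveb W) Df W w) / A.
  by rewrite hcount /Df sumrB mulrBl.
have E (w : {ffun 'I_n * 'I_n -> bool}) :
    Pw w * (estimator eps g w - (graphlet_count g a)%:R) ^+ 2 =
    (A ^+ 2)^-1 * \sum_(W : {ffun 'I_k -> 'I_n} | injectiveb W)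
       \sum_(W' : {ffun 'I_k -> 'I_n} | injectiveb W') Pw w * (Df W w * Df W' w).
  transitivity ((A ^+ 2)^-1 * (Pw w * \sum_(W : {ffun 'I_k -> 'I_n} | injectiveb W)
       \sum_(W' : {ffun 'I_k -> 'I_n} | injectiveb W') (Df W w * Df W' w))).
    rewrite hdiff expr_div_n expr2 mulr_suml.
    rewrite (eq_bigr (fun W => \sum_(W' : {ffun 'I_k -> 'I_n} | injectiveb W') Df W w * Df W' w)); last first.
      by move=> W _; rewrite mulr_sumr.
    by rewrite [RHS]mulrCA; congr (_ * _); rewrite mulrC.
  congr (_ * _); rewrite mulr_sumr; apply: eq_bigr => W _; by rewrite mulr_sumr.
rewrite /mse (eq_bigr _ (fun w _ => E w)) -mulr_sumr.
rewrite exchange_big /=.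
rewrite (eq_bigr (fun W => \sum_(W' : {ffun 'I_k -> 'I_n} | injectiveb W') cov W W')); last first.
  by move=> W _; rewrite exchange_big.
set V := (X in _ <= X).
have hV0 : 0 <= V.
  by apply: mulr_ge0; [apply: mulr_ge0; [exact: Bc_ge0 | exact: sqr_ge0] | exact: sqr_ge0].
have hT : \sum_(W : {ffun 'I_k -> 'I_n} | injectiveb W)
       \sum_(W' : {ffun 'I_k -> 'I_n} | injectiveb W') cov W W' <= V.
  apply: (@le_trans _ _ (\sum_(W : {ffun 'I_k -> 'I_n})
       \sum_(W' : {ffun 'I_k -> 'I_n}) Bc * Sh W W')).
    rewrite big_mkcond; apply: ler_sum => W _; case: ifP => iW; last first.
      by apply: sumr_ge0 => W' _; rewrite mulr_ge0 ?Bc_ge0 ?Sh_ge0.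
    rewrite big_mkcond; apply: ler_sum => W' _; case: ifP => iW'.
      exact: cov_Sh.
    by rewrite mulr_ge0 ?Bc_ge0 ?Sh_ge0.
  rewrite (eq_bigr (fun W => Bc * ((#|Pe|%:R) ^+ 2 * n%:R ^+ (k - 2)))); last first.
    by move=> W _; rewrite -mulr_sumr sum_Sh.
  rewrite sumr_const card_ffun !card_ord -[_ *+ (n ^ k)%N]mulr_natr natrX /V -!mulrA le_eqVlt; apply/orP; left; apply/eqP.
  congr (_ * (_ * _)).
  rewrite -!exprM -exprD (_ : (k - 2 + k = (k - 1) * 2)%N) //; lia.
apply: (@le_trans _ _ ((A ^+ 2)^-1 * V)); first by apply: ler_wpM2l; rewrite ?invr_ge0 ?exprn_ge0 // ltW.
apply: ler_piMl => //.
rewrite invf_le1 ?exprn_gt0 //; apply: exprn_ege1.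
by rewrite /A (ler1n R); exact: Aut_pos.
Qed.

End Final.

End Est.


End Main.


Theorem theorem1 (R : realType) (k : nat) (hk : (2 <= k)%N)
    (g : rel 'I_k) (hg : simple_graph g) (eps : R) (heps : 0 < eps) :
  exists C : R, forall (n : nat) (a : rel 'I_n), simple_graph a ->
    Num.sqrt (mse eps g a) <= C * (n%:R) ^+ (k - 1).
Proof.
exists (Num.sqrt (Bc R eps k g * (#|Pe k g|%:R) ^+ 2)) => n a ha.
have hB : 0 <= Bc R eps k g * (#|Pe k g|%:R) ^+ 2.
  by apply: mulr_ge0; [rewrite /Bc sqr_ge0 | apply: sqr_ge0].
apply: le_trans (ler_wsqrtr (@mse_bound R eps k n g a heps hg ha hk)) _.
rewrite sqrtrM // sqrtr_sqr ger0_norm //.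
by apply: exprn_ge0; rewrite ler0n.
Qed.
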